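(* Let $X$ be a compact metric space, $f:X\dashrightarrow X$ a continuous open-dense defined map and $0\ne\mu_0\in SM^+(X)$. 1) If $\mu$ is a weak cluster point of the Cesàro averages $\mu_n=\frac1n\sum_{j=0}^n(f_* )^j(\mu_0)$, then $f_*(\mu)\ge\mu$. 2) If $f_*(\mu_0)\le\mu_0$, then $(f_* )^n(\mu_0)$ converges weakly to some $\mu_\infty\in SM^+(X)$, and $\mu_\infty$ is the largest element of the (non-empty) set $\{\mu\in SM^+(X):\mu\le\mu_0,\ f_*(\mu)=\mu\}$. 3) If $f_*(\mu_0)\ge\mu_0$, then the set $\{\mu\in SM^+(X):\mu\ge\mu_0,\ f_*(\mu)=\mu\}$ is non-empty and has a smallest element.
   Context: Positive strong submeasure on $X$: a map $\mu:C^0(X)\to\mathbb{R}$ that is sub-linear ($\mu(\varphi_1+\varphi_2)\le\mu(\varphi_1)+\mu(\varphi_2)$, $\mu(\lambda\varphi)=\lambda\mu(\varphi)$ for $\lambda\ge0$), bounded ($|\mu(\varphi)|\le C\|\varphi\|_{L^\infty}$) and non-decreasing; $SM^+(X)$ is the set of these. $\mu\le\nu$ means $\mu(\varphi)\le\nu(\varphi)$ for all $\varphi$. Weak convergence: uniformly bounded norms and pointwise convergence on $C^0(X)$. A continuous open-dense defined map $f:X\dashrightarrow X$ is a continuous map $f:\mathrm{OpenDom}(f)\to X$ with $\mathrm{OpenDom}(f)$ open dense in $X$. For $\varphi\in C^0(X)$, $f^*(\varphi):=E(\varphi\circ f)$ where for bounded $g$ on an open dense $U$, $E(g)=g$ on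 $U$ and $E(g)(x)=\limsup_{y\in U,y\to x}g(y)$ off $U$. Pushforward: $f_*(\mu)(\varphi):=\inf\{\mu(\psi):\psi\in C^0(X),\ \psi\ge f^*(\varphi)\}$; $(f_* )^j$ denotes the $j$-fold iterate of the operator $f_*$. *)

(* Defs.v *)
From Stdlib Require Import Reals Classical ClassicalEpsilon.
Open Scope R_scope.

Record CompactMetricSpace := {
  cm_carrier :> Type;
  cm_dist : cm_carrier -> cm_carrier -> R;
  cm_dist_nonneg : forall x y, 0 <= cm_dist x y;
  cm_dist_eq0 : forall x y, cm_dist x y = 0 <-> x = y;
  cm_dist_sym : forall x y, cm_dist x y = cm_dist y x;
  cm_dist_tri : forall x y z, cm_dist x z <= cm_dist x y + cm_dist y z;
  cm_compact : forall u : nat -> cm_carrier,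
      exists (s : nat -> nat) (l : cm_carrier),
        (forall n, (s n < s (S n))%nat) /\
        forall eps, eps > 0 -> exists N, forall n, (n >= N)%nat ->
          cm_dist (u (s n)) l < eps
}.

Section Defs.
Variable X : CompactMetricSpace.
Notation d := (cm_dist X).

Definition cont (phi : X -> R) : Prop :=
  forall x eps, eps > 0 -> exists delta, delta > 0 /\
    forall y, d x y < delta -> Rabs (phi y - phi x) < eps.

(** continuous open-dense defined maps  f : OpenDom(f) -> X ;
    represented by the domain U and a total function whose values
    outside U are irrelevant *)
Definition open_set (U : X -> Prop) : Prop :=
  forall x, U x -> exists r, r > 0 /\ forall y, d x y < r -> U y.
Definition dense_set (U : X -> Prop) : Prop :=
  forall x eps, eps > 0 -> exists y, U y /\ d x y < eps.
Definition cont_on (U : X -> Prop) (f : X -> X) : Prop :=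
  forall x, U x -> forall eps, eps > 0 -> exists delta, delta > 0 /\
    forall y, U y -> d x y < delta -> d (f y) (f x) < eps.
Definition open_dense_map (U : X -> Prop) (f : X -> X) : Prop :=
  open_set U /\ dense_set U /\ cont_on U f.

(** sup / inf of a set of reals (meaningful when they exist) *)
Definition is_glb (E : R -> Prop) (l : R) : Prop :=
  (forall r, E r -> l <= r) /\ (forall b, (forall r, E r -> b <= r) -> b <= l).
Definition Rsup (E : R -> Prop) : R := epsilon (inhabits 0) (fun l => is_lub E l).
Definition Rinf (E : R -> Prop) : R := epsilon (inhabits 0) (fun l => is_glb E l).

Definition limsup_in (U : X -> Prop) (g : X -> R) (x : X) : R :=
  Rinf (fun s => exists delta, delta > 0 /\
          s = Rsup (fun r => exists y, U y /\ d y x < delta /\ r = g y)).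
Definition extE (U : X -> Prop) (g : X -> R) : X -> R :=
  fun x => if excluded_middle_informative (U x) then g x else limsup_in U g x.

Definition pullback (U : X -> Prop) (f : X -> X) (phi : X -> R) : X -> R :=
  extE U (fun x => phi (f x)).

(** functionals on C^0(X): only values on continuous functions matter *)
Definition functional := (X -> R) -> R.

Definition pushforward (U : X -> Prop) (f : X -> X) (mu : functional) : functional :=
  fun phi => Rinf (fun r => exists psi, cont psi /\
                     (forall x, psi x >= pullback U f phi x) /\ r = mu psi).

(** |mu(phi)| <= C ||phi||_infty, written with an arbitrary bound M >= ||phi||_infty *)
Definition bounded_by (C : R) (mu : functional) : Prop :=
  forall phi, cont phi -> forall M, (forall x, Rabs (phi x) <= M) ->
    Rabs (mu phi) <= C * M.

Definition SMplus (mu : functional) : Prop :=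
  (forall phi1 phi2, cont phi1 -> cont phi2 ->
      mu (fun x => phi1 x + phi2 x) <= mu phi1 + mu phi2) /\
  (forall lam phi, lam >= 0 -> cont phi -> mu (fun x => lam * phi x) = lam * mu phi) /\
  (exists C, bounded_by C mu) /\
  (forall phi1 phi2, cont phi1 -> cont phi2 -> (forall x, phi1 x <= phi2 x) ->
      mu phi1 <= mu phi2).

Definition mle (mu nu : functional) : Prop := forall phi, cont phi -> mu phi <= nu phi.
Definition meq (mu nu : functional) : Prop := forall phi, cont phi -> mu phi = nu phi.
Definition mnonzero (mu : functional) : Prop := exists phi, cont phi /\ mu phi <> 0.

Definition weak_conv (nu : nat -> functional) (mu : functional) : Prop :=
  (exists C, forall n, bounded_by C (nu n)) /\
  forall phi, cont phi -> Un_cv (fun n => nu n phi) (mu phi).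

Definition weak_cluster (nu : nat -> functional) (mu : functional) : Prop :=
  exists s : nat -> nat, (forall n, (s n < s (S n))%nat) /\
    weak_conv (fun n => nu (s n)) mu.

Definition push_iter (U : X -> Prop) (f : X -> X) (j : nat) (mu : functional) : functional :=
  Nat.iter j (pushforward U f) mu.

Definition cesaro (U : X -> Prop) (f : X -> X) (mu0 : functional) (n : nat) : functional :=
  fun phi => (/ INR n) * sum_f_R0 (fun j => push_iter U f j mu0 phi) n.

End Defs.

(* Main.v *)
Require Import Defs.
From Stdlib Require Import Reals Classical ClassicalEpsilon.
From Stdlib Require Import Lra Lia FunctionalExtensionality.
Open Scope R_scope.

Lemma Rsup_spec (E : R -> Prop) :
  (exists r, E r) -> (exists b, forall r, E r -> r <= b) -> is_lub E (Rsup E).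
Proof.
  intros [r Hr] [b Hb]. unfold Rsup. apply epsilon_spec.
  destruct (completeness E) as [m Hm].
  - exists b. exact Hb.
  - exists r. exact Hr.
  - exists m. exact Hm.
Qed.

Lemma Rinf_spec (E : R -> Prop) :
  (exists r, E r) -> (exists b, forall r, E r -> b <= r) -> is_glb E (Rinf E).
Proof.
  intros [r Hr] [b Hb]. unfold Rinf. apply epsilon_spec.
  destruct (completeness (fun x => E (-x))) as [m [Hm1 Hm2]].
  - exists (-b). intros x Hx. specialize (Hb _ Hx). lra.
  - exists (-r). rewrite Ropp_involutive. exact Hr.
  - exists (-m). split.
    + intros r0 Hr0. assert (-r0 <= m).
      { apply Hm1. rewrite Ropp_involutive. exact Hr0. } lra.
    + intros b0 Hb0. assert (m <= -b0).
      { apply Hm2. intros x Hx. specialize (Hb0 _ Hx). lra. } lra.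
Qed.

Lemma glb_le E l r : is_glb E l -> E r -> l <= r.
Proof. intros [H _] Hr. auto. Qed.
Lemma glb_ge E l b : is_glb E l -> (forall r, E r -> b <= r) -> b <= l.
Proof. intros [_ H] Hb. auto. Qed.
Lemma lub_ge E l r : is_lub E l -> E r -> r <= l.
Proof. intros [H _] Hr. auto. Qed.
Lemma lub_le E l b : is_lub E l -> (forall r, E r -> r <= b) -> l <= b.
Proof. intros [_ H] Hb. auto. Qed.
Lemma glb_approx E l eps : is_glb E l -> eps > 0 -> exists r, E r /\ r < l + eps.
Proof.
  intros H He. apply NNPP. intros Hn.
  assert (l + eps <= l). { apply (glb_ge E). exact H. intros r Hr.
    apply Rnot_lt_le. intros Hlt. apply Hn. exists r. auto. }
  lra.
Qed.

Lemma cont_const (X : CompactMetricSpace) (c : R) : cont X (fun _ => c).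
Proof.
  intros x eps He. exists 1. split. lra. intros y _.
  replace (c - c) with 0 by ring. rewrite Rabs_R0. lra.
Qed.

Lemma cont_plus (X : CompactMetricSpace) (p q : X -> R) :
  cont X p -> cont X q -> cont X (fun x => p x + q x).
Proof.
  intros Hp Hq x eps He.
  destruct (Hp x (eps/2)) as [d1 [Hd1 H1]]. lra.
  destruct (Hq x (eps/2)) as [d2 [Hd2 H2]]. lra.
  exists (Rmin d1 d2). split. apply Rmin_Rgt_r. lra.
  intros y Hy.
  assert (Hy1 : cm_dist X x y < d1) by (eapply Rlt_le_trans; [exact Hy| apply Rmin_l]).
  assert (Hy2 : cm_dist X x y < d2) by (eapply Rlt_le_trans; [exact Hy| apply Rmin_r]).
  specialize (H1 y Hy1). specialize (H2 y Hy2).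
  replace (p y + q y - (p x + q x)) with ((p y - p x) + (q y - q x)) by ring.
  eapply Rle_lt_trans. apply Rabs_triang. lra.
Qed.

Lemma cont_scal (X : CompactMetricSpace) (l : R) (p : X -> R) :
  cont X p -> cont X (fun x => l * p x).
Proof.
  intros Hp x eps He.
  destruct (Hp x (eps / (Rabs l + 1))) as [d1 [Hd1 H1]].
  { apply Rdiv_lt_0_compat. lra. pose proof (Rabs_pos l). lra. }
  exists d1. split. exact Hd1. intros y Hy. specialize (H1 y Hy).
  replace (l * p y - l * p x) with (l * (p y - p x)) by ring.
  rewrite Rabs_mult. pose proof (Rabs_pos l).
  apply Rle_lt_trans with (Rabs l * (eps / (Rabs l + 1))).
  apply Rmult_le_compat_l. lra. lra.
  replace (Rabs l * (eps / (Rabs l + 1))) with (eps * (Rabs l / (Rabs l + 1))) by (field; lra).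
  assert (Rabs l / (Rabs l + 1) < 1).
  { apply (Rmult_lt_reg_r (Rabs l + 1)). lra. unfold Rdiv. rewrite Rmult_assoc, Rinv_l; lra. }
  pose proof (Rmult_lt_compat_l eps _ _ He H0). lra.
Qed.

Lemma cont_bounded (X : CompactMetricSpace) (phi : X -> R) :
  cont X phi -> exists M, forall x, Rabs (phi x) <= M.
Proof.
  intros Hc. apply NNPP. intros Hn.
  assert (H : forall n : nat, exists x, INR n < Rabs (phi x)).
  { intros n. apply NNPP. intros H1. apply Hn. exists (INR n). intros x.
    apply Rnot_lt_le. intros H2. apply H1. exists x. exact H2. }
  set (u := fun n => proj1_sig (constructive_indefinite_description _ (H n))).
  assert (Hu : forall n, INR n < Rabs (phi (u n))).
  { intros n. unfold u. destruct constructive_indefinite_description; auto. }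
  destruct (cm_compact X u) as [s [l [Hs Hl]]].
  destruct (Hc l 1 Rlt_0_1) as [delta [Hd Hdelta]].
  destruct (Hl delta Hd) as [N HN].
  assert (Hsn : forall n, (n <= s n)%nat).
  { induction n. lia. specialize (Hs n). lia. }
  destruct (INR_unbounded (Rabs (phi l) + 1)) as [k Hk].
  set (n := (N + k)%nat).
  assert (H1 : cm_dist X l (u (s n)) < delta).
  { rewrite cm_dist_sym. apply HN. unfold n. lia. }
  specialize (Hdelta _ H1).
  specialize (Hu (s n)).
  assert (INR k <= INR (s n)). { apply le_INR. specialize (Hsn n). unfold n in *. lia. }
  assert (Rabs (phi (u (s n))) <= Rabs (phi l) + Rabs (phi (u (s n)) - phi l)).
  { replace (phi (u (s n))) with (phi l + (phi (u (s n)) - phi l)) at 1 by ring.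
    apply Rabs_triang. }
  lra.
Qed.


Definition Sset (X : CompactMetricSpace) (U : X -> Prop) (g : X -> R) (x : X) (dl : R) :=
  fun r => exists y, U y /\ cm_dist X y x < dl /\ r = g y.
Definition Sball (X : CompactMetricSpace) (U : X -> Prop) (g : X -> R) (x : X) (dl : R) :=
  Rsup (Sset X U g x dl).
Definition Lset (X : CompactMetricSpace) (U : X -> Prop) (g : X -> R) (x : X) :=
  fun s => exists dl, dl > 0 /\ s = Sball X U g x dl.

Lemma limsup_eq X U g x : limsup_in X U g x = Rinf (Lset X U g x).
Proof. reflexivity. Qed.


Lemma Sball_lub X U g x dl a b : dense_set X U -> (forall y, U y -> a <= g y <= b) ->
  dl > 0 -> is_lub (Sset X U g x dl) (Sball X U g x dl).
Proof.
  intros HD Hg Hdl. apply Rsup_spec.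
  - destruct (HD x dl Hdl) as [y [Hy Hxy]]. exists (g y). exists y.
    rewrite cm_dist_sym. auto.
  - exists b. intros r [y [Hy [_ ->]]]. apply Hg; auto.
Qed.

Lemma Sball_bounds X U g x dl a b : dense_set X U -> (forall y, U y -> a <= g y <= b) ->
  dl > 0 -> a <= Sball X U g x dl <= b.
Proof.
  intros HD Hg Hdl. pose proof (Sball_lub X U g x dl a b HD Hg Hdl) as H. split.
  - destruct (HD x dl Hdl) as [y [Hy Hxy]].
    apply Rle_trans with (g y). apply Hg; auto.
    apply (lub_ge _ _ _ H). exists y. rewrite cm_dist_sym. auto.
  - apply (lub_le _ _ _ H). intros r [y [Hy [_ ->]]]. apply Hg; auto.
Qed.

Lemma Sball_mono_dl X U g x d1 d2 a b : dense_set X U -> (forall y, U y -> a <= g y <= b) ->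
  0 < d1 -> d1 <= d2 -> Sball X U g x d1 <= Sball X U g x d2.
Proof.
  intros HD Hg H1 H12.
  apply (lub_le _ _ _ (Sball_lub X U g x d1 a b HD Hg H1)).
  intros r [y [Hy [Hd ->]]]. apply (lub_ge _ _ _ (Sball_lub X U g x d2 a b HD Hg ltac:(lra))).
  exists y. split; auto. split; auto. lra.
Qed.

Lemma L_glb X U g x a b : dense_set X U -> (forall y, U y -> a <= g y <= b) ->
  is_glb (Lset X U g x) (limsup_in X U g x).
Proof.
  intros HD Hg. rewrite limsup_eq. apply Rinf_spec.
  - exists (Sball X U g x 1). exists 1. split; auto. lra.
  - exists a. intros r [dl [Hdl ->]]. apply (Sball_bounds X U g x dl a b HD Hg Hdl).
Qed.

Lemma L_bounds X U g x a b : dense_set X U -> (forall y, U y -> a <= g y <= b) ->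
  a <= limsup_in X U g x <= b.
Proof.
  intros HD Hg. pose proof (L_glb X U g x a b HD Hg) as H. split.
  - apply (glb_ge _ _ _ H). intros r [dl [Hdl ->]]. apply (Sball_bounds X U g x dl a b HD Hg Hdl).
  - apply Rle_trans with (Sball X U g x 1).
    apply (glb_le _ _ _ H). exists 1. split; auto. lra.
    apply (Sball_bounds X U g x 1 a b HD Hg). lra.
Qed.

Lemma extE_bounds X U g x a b : dense_set X U -> (forall y, U y -> a <= g y <= b) ->
  a <= extE X U g x <= b.
Proof.
  intros HD Hg. unfold extE. destruct (excluded_middle_informative (U x)).
  - auto.
  - apply (L_bounds X U g x a b HD Hg).
Qed.

Lemma extE_mono X U g1 g2 x a1 b1 a2 b2 : dense_set X U ->
  (forall y, U y -> a1 <= g1 y <= b1) -> (forall y, U y -> a2 <= g2 y <= b2) ->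
  (forall y, U y -> g1 y <= g2 y) -> extE X U g1 x <= extE X U g2 x.
Proof.
  intros HD H1 H2 H12. unfold extE. destruct (excluded_middle_informative (U x)).
  - auto.
  - apply (glb_ge _ _ _ (L_glb X U g2 x a2 b2 HD H2)).
    intros r [dl [Hdl ->]].
    apply Rle_trans with (Sball X U g1 x dl).
    + apply (glb_le _ _ _ (L_glb X U g1 x a1 b1 HD H1)). exists dl. auto.
    + apply (lub_le _ _ _ (Sball_lub X U g1 x dl a1 b1 HD H1 Hdl)).
      intros r [y [Hy [Hd ->]]]. apply Rle_trans with (g2 y). auto.
      apply (lub_ge _ _ _ (Sball_lub X U g2 x dl a2 b2 HD H2 Hdl)). exists y. auto.
Qed.

Lemma extE_sub X U g1 g2 x a1 b1 a2 b2 : dense_set X U ->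
  (forall y, U y -> a1 <= g1 y <= b1) -> (forall y, U y -> a2 <= g2 y <= b2) ->
  extE X U (fun y => g1 y + g2 y) x <= extE X U g1 x + extE X U g2 x.
Proof.
  intros HD H1 H2. unfold extE. destruct (excluded_middle_informative (U x)).
  - lra.
  - assert (H12 : forall y, U y -> a1 + a2 <= g1 y + g2 y <= b1 + b2).
    { intros y Hy. specialize (H1 y Hy). specialize (H2 y Hy). lra. }
    set (L1 := limsup_in X U g1 x). set (L2 := limsup_in X U g2 x).
    apply Rnot_lt_le. intros Hlt.
    set (e := (limsup_in X U (fun y => g1 y + g2 y) x - L1 - L2) / 3).
    assert (He : e > 0) by (unfold e; lra).
    destruct (glb_approx _ _ e (L_glb X U g1 x a1 b1 HD H1) He) as [r1 [[d1 [Hd1 ->]] Hr1]].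
    destruct (glb_approx _ _ e (L_glb X U g2 x a2 b2 HD H2) He) as [r2 [[d2 [Hd2 ->]] Hr2]].
    set (dl := Rmin d1 d2).
    assert (Hdl : dl > 0) by (apply Rmin_Rgt_r; lra).
    assert (A : limsup_in X U (fun y => g1 y + g2 y) x <= Sball X U (fun y => g1 y + g2 y) x dl).
    { apply (glb_le _ _ _ (L_glb X U _ x _ _ HD H12)). exists dl. auto. }
    assert (B : Sball X U (fun y => g1 y + g2 y) x dl <= Sball X U g1 x dl + Sball X U g2 x dl).
    { apply (lub_le _ _ _ (Sball_lub X U _ x dl _ _ HD H12 Hdl)).
      intros r [y [Hy [Hd ->]]].
      pose proof (lub_ge _ _ (g1 y) (Sball_lub X U g1 x dl a1 b1 HD H1 Hdl) ltac:(exists y; auto)).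
      pose proof (lub_ge _ _ (g2 y) (Sball_lub X U g2 x dl a2 b2 HD H2 Hdl) ltac:(exists y; auto)).
      lra. }
    assert (C1 : Sball X U g1 x dl <= Sball X U g1 x d1).
    { apply (Sball_mono_dl X U g1 x dl d1 a1 b1 HD H1); [unfold dl; apply Rmin_glb_lt; lra | apply Rmin_l]. }
    assert (C2 : Sball X U g2 x dl <= Sball X U g2 x d2).
    { apply (Sball_mono_dl X U g2 x dl d2 a2 b2 HD H2); [unfold dl; apply Rmin_glb_lt; lra | apply Rmin_r]. }
    unfold e, L1, L2 in *. lra.
Qed.

Lemma extE_scal X U g x a b l : dense_set X U ->
  (forall y, U y -> a <= g y <= b) -> l > 0 ->
  extE X U (fun y => l * g y) x <= l * extE X U g x.
Proof.
  intros HD Hg Hl. unfold extE. destruct (excluded_middle_informative (U x)).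
  - lra.
  - assert (Hlg : forall y, U y -> Rmin (l*a) (l*b) <= l * g y <= Rmax (l*a) (l*b)).
    { intros y Hy. specialize (Hg y Hy).
      assert (l * a <= l * g y) by (apply Rmult_le_compat_l; lra).
      assert (l * g y <= l * b) by (apply Rmult_le_compat_l; lra).
      split. apply Rle_trans with (l*a). apply Rmin_l. lra.
      apply Rle_trans with (l*b). lra. apply Rmax_r. }
    cut (limsup_in X U (fun y => l * g y) x / l <= limsup_in X U g x).
    { intros H. apply (Rmult_le_compat_l l) in H. 2: lra.
      replace (l * (limsup_in X U (fun y => l * g y) x / l)) with
        (limsup_in X U (fun y => l * g y) x) in H by (field; lra). exact H. }
    apply (glb_ge _ _ _ (L_glb X U g x a b HD Hg)).
    intros r [dl [Hdl ->]].
    assert (A : limsup_in X U (fun y => l * g y) x <= Sball X U (fun y => l * g y) x dl).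
    { apply (glb_le _ _ _ (L_glb X U _ x _ _ HD Hlg)). exists dl. auto. }
    assert (B : Sball X U (fun y => l * g y) x dl <= l * Sball X U g x dl).
    { apply (lub_le _ _ _ (Sball_lub X U _ x dl _ _ HD Hlg Hdl)).
      intros r [y [Hy [Hd ->]]].
      apply Rmult_le_compat_l. lra.
      apply (lub_ge _ _ _ (Sball_lub X U g x dl a b HD Hg Hdl)). exists y. auto. }
    apply (Rmult_le_reg_l l). lra.
    replace (l * (limsup_in X U (fun y => l * g y) x / l)) with
        (limsup_in X U (fun y => l * g y) x) by (field; lra). lra.
Qed.


Lemma Rabs_le_inv a b : Rabs a <= b -> - b <= a <= b.
Proof. unfold Rabs. destruct (Rcase_abs a); intros; lra. Qed.

Lemma cont_bounds (X : CompactMetricSpace) (phi : X -> R) :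
  cont X phi -> exists M, forall x, -M <= phi x <= M.
Proof.
  intros H. destruct (cont_bounded X phi H) as [M HM]. exists M. intros x.
  specialize (HM x). apply Rabs_le_inv in HM. exact HM.
Qed.

Lemma pb_bounds X U f phi x a b : dense_set X U -> (forall y, a <= phi y <= b) ->
  a <= pullback X U f phi x <= b.
Proof. intros HD H. unfold pullback. apply (extE_bounds X U _ x a b HD). intros y _. apply H. Qed.

Lemma pb_mono X U f p q x : dense_set X U -> cont X p -> cont X q ->
  (forall y, p y <= q y) -> pullback X U f p x <= pullback X U f q x.
Proof.
  intros HD Hp Hq Hpq. destruct (cont_bounds X p Hp) as [M1 H1].
  destruct (cont_bounds X q Hq) as [M2 H2]. unfold pullback.
  apply (extE_mono X U _ _ x (-M1) M1 (-M2) M2 HD); intros y _; auto.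
Qed.

Lemma pb_sub X U f p q x : dense_set X U -> cont X p -> cont X q ->
  pullback X U f (fun y => p y + q y) x <= pullback X U f p x + pullback X U f q x.
Proof.
  intros HD Hp Hq. destruct (cont_bounds X p Hp) as [M1 H1].
  destruct (cont_bounds X q Hq) as [M2 H2]. unfold pullback.
  apply (extE_sub X U (fun y => p (f y)) (fun y => q (f y)) x (-M1) M1 (-M2) M2 HD); intros y _; auto.
Qed.

Lemma pb_scal X U f l p x : dense_set X U -> cont X p -> l > 0 ->
  pullback X U f (fun y => l * p y) x <= l * pullback X U f p x.
Proof.
  intros HD Hp Hl. destruct (cont_bounds X p Hp) as [M1 H1]. unfold pullback.
  apply (extE_scal X U (fun y => p (f y)) x (-M1) M1 l HD); auto.
Qed.

Definition PS X U f (mu : functional X) phi :=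
  fun r => exists psi, cont X psi /\ (forall x, psi x >= pullback X U f phi x) /\ r = mu psi.

Lemma push_eq X U f mu phi : pushforward X U f mu phi = Rinf (PS X U f mu phi).
Proof. reflexivity. Qed.

Lemma push_glb_gen X U f mu phi b : dense_set X U -> cont X phi ->
  (forall psi, cont X psi -> (forall x, psi x >= pullback X U f phi x) -> b <= mu psi) ->
  is_glb (PS X U f mu phi) (pushforward X U f mu phi).
Proof.
  intros HD Hp Hb. rewrite push_eq. apply Rinf_spec.
  - destruct (cont_bounds X phi Hp) as [M HM].
    exists (mu (fun _ => M)). exists (fun _ => M). split. apply cont_const. split; auto.
    intros x. pose proof (pb_bounds X U f phi x (-M) M HD HM). lra.
  - exists b. intros r [psi [H1 [H2 ->]]]. auto.
Qed.

Lemma SM_zero X mu : SMplus X mu -> mu (fun _ => 0) = 0.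
Proof.
  intros [_ [Hh _]].
  specialize (Hh 0 (fun _ => 0) ltac:(lra) (cont_const X 0)). cbv beta in Hh.
  replace (fun _ : X => 0 * 0) with (fun _ : X => 0) in Hh
    by (apply functional_extensionality; intros; ring).
  lra.
Qed.

Lemma SM_mono X mu p q : SMplus X mu -> cont X p -> cont X q ->
  (forall x, p x <= q x) -> mu p <= mu q.
Proof. intros [_ [_ [_ Hm]]]. auto. Qed.

Lemma push_glb X U f mu phi : dense_set X U -> SMplus X mu -> cont X phi ->
  is_glb (PS X U f mu phi) (pushforward X U f mu phi).
Proof.
  intros HD Hmu Hp. destruct (cont_bounds X phi Hp) as [M HM].
  apply (push_glb_gen X U f mu phi (mu (fun _ => -M)) HD Hp).
  intros psi Hpsi Hge. apply (SM_mono X mu); auto. apply cont_const.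
  intros x. specialize (Hge x). pose proof (pb_bounds X U f phi x (-M) M HD HM). lra.
Qed.

Lemma push_le X U f mu phi psi : dense_set X U -> SMplus X mu -> cont X phi -> cont X psi ->
  (forall x, psi x >= pullback X U f phi x) -> pushforward X U f mu phi <= mu psi.
Proof.
  intros HD Hmu Hp Hpsi Hge. apply (glb_le _ _ _ (push_glb X U f mu phi HD Hmu Hp)).
  exists psi. auto.
Qed.

Lemma push_ge X U f mu phi c : dense_set X U -> SMplus X mu -> cont X phi ->
  (forall psi, cont X psi -> (forall x, psi x >= pullback X U f phi x) -> c <= mu psi) ->
  c <= pushforward X U f mu phi.
Proof.
  intros HD Hmu Hp H. apply (glb_ge _ _ _ (push_glb X U f mu phi HD Hmu Hp)).
  intros r [psi [H1 [H2 ->]]]. auto.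
Qed.

Lemma push_mono X U f mu nu : dense_set X U -> SMplus X mu -> SMplus X nu ->
  mle X mu nu -> mle X (pushforward X U f mu) (pushforward X U f nu).
Proof.
  intros HD Hmu Hnu Hle phi Hp. apply (push_ge X U f nu phi _ HD Hnu Hp).
  intros psi Hpsi Hge. apply Rle_trans with (mu psi).
  apply (push_le X U f mu phi psi HD Hmu Hp Hpsi Hge). auto.
Qed.

Lemma push_scal_le X U f mu l phi : dense_set X U -> SMplus X mu -> cont X phi -> l > 0 ->
  pushforward X U f mu (fun x => l * phi x) <= l * pushforward X U f mu phi.
Proof.
  intros HD Hmu Hp Hl.
  assert (Hlp : cont X (fun x => l * phi x)) by (apply cont_scal; auto).
  cut (pushforward X U f mu (fun x => l * phi x) / l <= pushforward X U f mu phi).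
  { intros H. apply (Rmult_le_compat_l l) in H. 2: lra.
    replace (l * (pushforward X U f mu (fun x => l * phi x) / l)) with
      (pushforward X U f mu (fun x => l * phi x)) in H by (field; lra). exact H. }
  apply (push_ge X U f mu phi _ HD Hmu Hp). intros psi Hpsi Hge.
  assert (H : pushforward X U f mu (fun x => l * phi x) <= mu (fun x => l * psi x)).
  { apply (push_le X U f mu _ _ HD Hmu Hlp). apply cont_scal; auto.
    intros x. pose proof (pb_scal X U f l phi x HD Hp Hl). specialize (Hge x).
    assert (l * pullback X U f phi x <= l * psi x) by (apply Rmult_le_compat_l; lra). lra. }
  destruct Hmu as [_ [Hh _]]. rewrite (Hh l psi ltac:(lra) Hpsi) in H.
  apply (Rmult_le_reg_l l). lra.
  replace (l * (pushforward X U f mu (fun x => l * phi x) / l)) with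
      (pushforward X U f mu (fun x => l * phi x)) by (field; lra). lra.
Qed.

Lemma push_zero X U f mu : dense_set X U -> SMplus X mu ->
  pushforward X U f mu (fun _ => 0) = 0.
Proof.
  intros HD Hmu. pose proof (SM_zero X mu Hmu) as Z. apply Rle_antisym.
  - apply Rle_trans with (mu (fun _ => 0)); [|lra].
    apply (push_le X U f mu); auto; try apply cont_const.
    intros x. pose proof (pb_bounds X U f (fun _ => 0) x 0 0 HD ltac:(intros; lra)). lra.
  - apply (push_ge X U f mu _ _ HD Hmu (cont_const X 0)). intros psi Hpsi Hge.
    apply Rle_trans with (mu (fun _ => 0)); [lra|].
    apply (SM_mono X mu); auto. apply cont_const.
    intros x. pose proof (pb_bounds X U f (fun _ => 0) x 0 0 HD ltac:(intros; lra)).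
    specialize (Hge x). lra.
Qed.

Lemma push_bounded X U f mu C : dense_set X U -> inhabited X -> SMplus X mu ->
  bounded_by X C mu -> bounded_by X C (pushforward X U f mu).
Proof.
  intros HD [x0] Hmu HC. pose proof Hmu as Hmu'. destruct Hmu' as [Hs [Hh [_ Hm]]].
  intros p Hp M HM.
    assert (HM' : forall x, -M <= p x <= M) by (intros x; apply Rabs_le_inv; auto).
    assert (Hup : pushforward X U f mu p <= mu (fun _ => M)).
    { apply (push_le X U f mu); auto. apply cont_const. intros x.
      pose proof (pb_bounds X U f p x (-M) M HD HM'). lra. }
    assert (Hlo : mu (fun _ => -M) <= pushforward X U f mu p).
    { apply (push_ge X U f mu p _ HD Hmu Hp). intros psi Hpsi Hge.
      apply (SM_mono X mu); auto. apply cont_const. intros x.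
      pose proof (pb_bounds X U f p x (-M) M HD HM'). specialize (Hge x). lra. }
    assert (HM0 : 0 <= M) by (specialize (HM x0); pose proof (Rabs_pos (p x0)); lra).
    assert (A1 := HC (fun _ => M) (cont_const X M) M ltac:(intros; rewrite Rabs_right; lra)).
    assert (A2 := HC (fun _ => -M) (cont_const X (-M)) M ltac:(intros; rewrite Rabs_left1; lra)).
    apply Rabs_le_inv in A1. apply Rabs_le_inv in A2.
    apply Rabs_le. lra.
Qed.

Lemma push_SM X U f mu : dense_set X U -> inhabited X -> SMplus X mu -> SMplus X (pushforward X U f mu).
Proof.
  intros HD [x0] Hmu. pose proof Hmu as Hmu'. destruct Hmu' as [Hs [Hh [[C HC] Hm]]].
  split; [|split; [|split]].
  - intros p q Hp Hq.
    assert (Hpq : cont X (fun x => p x + q x)) by (apply cont_plus; auto).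
    cut (pushforward X U f mu (fun x => p x + q x) - pushforward X U f mu p <= pushforward X U f mu q).
    { lra. }
    apply (push_ge X U f mu q _ HD Hmu Hq). intros psi2 Hpsi2 Hge2.
    cut (pushforward X U f mu (fun x => p x + q x) - mu psi2 <= pushforward X U f mu p).
    { lra. }
    apply (push_ge X U f mu p _ HD Hmu Hp). intros psi1 Hpsi1 Hge1.
    assert (pushforward X U f mu (fun x => p x + q x) <= mu (fun x => psi1 x + psi2 x)).
    { apply (push_le X U f mu _ _ HD Hmu Hpq). apply cont_plus; auto.
      intros x. pose proof (pb_sub X U f p q x HD Hp Hq). specialize (Hge1 x). specialize (Hge2 x). lra. }
    pose proof (Hs psi1 psi2 Hpsi1 Hpsi2). lra.
  - intros l p Hl Hp. destruct (Rle_lt_or_eq_dec 0 l ltac:(lra)) as [Hlt | Heq].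
    + apply Rle_antisym. apply push_scal_le; auto.
      pose proof (push_scal_le X U f mu (/ l) (fun x => l * p x) HD Hmu ltac:(apply cont_scal; auto)
          ltac:(apply Rinv_0_lt_compat; lra)) as H. cbv beta in H.
      replace (fun x => / l * (l * p x)) with p in H
        by (apply functional_extensionality; intros; field; lra).
      apply (Rmult_le_compat_l l) in H. 2: lra.
      replace (l * (/ l * pushforward X U f mu (fun x => l * p x))) with
        (pushforward X U f mu (fun x => l * p x)) in H by (field; lra). exact H.
    + subst l. rewrite Rmult_0_l.
      replace (fun x => 0 * p x) with (fun _ : X => 0)
        by (apply functional_extensionality; intros; ring).
      apply push_zero; auto.
  - exists C. apply push_bounded; auto.
  - intros p q Hp Hq Hpq. apply (push_ge X U f mu q _ HD Hmu Hq). intros psi Hpsi Hge.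
    apply (push_le X U f mu); auto. intros x. specialize (Hge x).
    pose proof (pb_mono X U f p q x HD Hp Hq Hpq). lra.
Qed.


Lemma iter_S X U f n mu0 :
  push_iter X U f (S n) mu0 = pushforward X U f (push_iter X U f n mu0).
Proof. reflexivity. Qed.

Lemma iter_SM X U f mu0 C : dense_set X U -> inhabited X -> SMplus X mu0 -> bounded_by X C mu0 ->
  forall n, SMplus X (push_iter X U f n mu0) /\ bounded_by X C (push_iter X U f n mu0).
Proof.
  intros HD Hin Hmu HC n. induction n as [|n [IH1 IH2]].
  - simpl. auto.
  - rewrite iter_S. split. apply push_SM; auto. apply push_bounded; auto.
Qed.

Lemma SM_inhabited X mu : SMplus X mu -> mnonzero X mu -> inhabited X.
Proof.
  intros Hmu [phi [Hp Hne]]. apply NNPP. intros Hn. apply Hne.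
  assert (E : forall x : X, False) by (intros x; apply Hn; exists; exact x).
  apply Rle_antisym.
  - rewrite <- (SM_zero X mu Hmu). apply (SM_mono X mu); auto. apply cont_const.
    intros x. destruct (E x).
  - rewrite <- (SM_zero X mu Hmu) at 1. apply (SM_mono X mu); auto. apply cont_const.
    intros x. destruct (E x).
Qed.

Lemma sum_shift (a : nat -> R) n : sum_f_R0 (fun j => a (S j)) n = sum_f_R0 a (S n) - a 0%nat.
Proof.
  induction n.
  - simpl. ring.
  - rewrite tech5, IHn. rewrite (tech5 a (S n)). ring.
Qed.

Lemma Rabs_lt_inv' a b : Rabs a < b -> - b < a < b.
Proof. unfold Rabs. destruct (Rcase_abs a); intros; lra. Qed.

Lemma part1 X U f mu0 : dense_set X U -> inhabited X -> SMplus X mu0 ->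
  forall mu : functional X, weak_cluster X (cesaro X U f mu0) mu ->
     mle X mu (pushforward X U f mu).
Proof.
  intros HD Hin Hmu0 mu [s [Hs [_ Hconv]]] phi Hphi.
  pose proof Hmu0 as [_ [_ [[C HC] _]]].
  pose proof (iter_SM X U f mu0 C HD Hin Hmu0 HC) as HI.
  set (nu := fun j => push_iter X U f j mu0).
  assert (Hsn : forall n, (n <= s n)%nat).
  { induction n. lia. specialize (Hs n). lia. }
  assert (StepA : forall psi, cont X psi -> (forall x, psi x >= pullback X U f phi x) ->
                   mu phi <= mu psi).
  { intros psi Hpsi Hge.
    destruct (cont_bounded X phi Hphi) as [M HM].
    assert (Hb : forall k, Rabs (nu k phi) <= C * M).
    { intros k. apply (proj2 (HI k)); auto. }
    assert (Key : forall n, (1 <= n)%nat ->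
       cesaro X U f mu0 n phi - cesaro X U f mu0 n psi <= 2 * C * M / INR n).
    { intros n Hn. unfold cesaro.
      assert (Hpos : 0 < INR n) by (apply lt_0_INR; lia).
      assert (S1 : sum_f_R0 (fun j => nu (S j) phi) n <= sum_f_R0 (fun j => nu j psi) n).
      { apply sum_Rle. intros j _. unfold nu. rewrite iter_S.
        apply push_le; auto. apply (proj1 (HI j)). }
      rewrite (sum_shift (fun j => nu j phi)) in S1. rewrite tech5 in S1.
      pose proof (Rabs_le_inv _ _ (Hb (S n))). pose proof (Rabs_le_inv _ _ (Hb 0%nat)).
      unfold nu in *.
      set (A := sum_f_R0 (fun j => push_iter X U f j mu0 phi) n) in *.
      set (B := sum_f_R0 (fun j => push_iter X U f j mu0 psi) n) in *.
      replace (/ INR n * A - / INR n * B) with ((A - B) * / INR n) by ring.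
      unfold Rdiv. apply Rmult_le_compat_r. left. apply Rinv_0_lt_compat. lra. lra. }
    apply Rnot_lt_le. intros Hlt.
    set (e := (mu phi - mu psi) / 3).
    assert (He : e > 0) by (unfold e; lra).
    destruct (Hconv psi Hpsi e He) as [N1 H1].
    destruct (Hconv phi Hphi e He) as [N2 H2].
    destruct (INR_unbounded (2 * C * M / e)) as [k Hk].
    set (n := (N1 + N2 + k + 1)%nat).
    specialize (H1 n ltac:(unfold n; lia)). specialize (H2 n ltac:(unfold n; lia)).
    unfold R_dist in H1, H2. apply Rabs_lt_inv' in H1. apply Rabs_lt_inv' in H2.
    assert (Hsk : (k + 1 <= s n)%nat) by (specialize (Hsn n); unfold n in *; lia).
    specialize (Key (s n) ltac:(lia)).
    assert (Hk2 : INR k + 1 <= INR (s n)).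
    { rewrite <- S_INR. apply le_INR. lia. }
    assert (Hpos : 0 < INR (s n)) by (pose proof (pos_INR k); lra).
    assert (2 * C * M / INR (s n) < e).
    { apply (Rmult_lt_reg_r (INR (s n))). lra.
      replace (2 * C * M / INR (s n) * INR (s n)) with (2 * C * M) by (field; lra).
      apply (Rmult_lt_compat_l e) in Hk. 2: lra.
      replace (e * (2 * C * M / e)) with (2 * C * M) in Hk by (field; lra).
      assert (e * INR k <= e * INR (s n)) by (apply Rmult_le_compat_l; lra). lra. }
    unfold e in *. lra. }
  apply (glb_ge _ _ _ (push_glb_gen X U f mu phi (mu phi) HD Hphi StepA)).
  intros r [psi [H1 [H2 ->]]]. auto.
Qed.


Lemma part2 X U f mu0 : dense_set X U -> inhabited X -> SMplus X mu0 ->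
  (mle X (pushforward X U f mu0) mu0 ->
     exists mu_inf, SMplus X mu_inf /\
       weak_conv X (fun n => push_iter X U f n mu0) mu_inf /\
       mle X mu_inf mu0 /\ meq X (pushforward X U f mu_inf) mu_inf /\
       forall mu, SMplus X mu -> mle X mu mu0 -> meq X (pushforward X U f mu) mu ->
         mle X mu mu_inf).
Proof.
  intros HD Hin Hmu0 Hdec.
  pose proof Hmu0 as [_ [_ [[C HC] _]]].
  pose proof (iter_SM X U f mu0 C HD Hin Hmu0 HC) as HI.
  set (nu := fun j => push_iter X U f j mu0).
  assert (HI' : forall n, SMplus X (nu n) /\ bounded_by X C (nu n)) by exact HI.
  clear HI. rename HI' into HI.
  assert (Hstep : forall n, mle X (nu (S n)) (nu n)).
  { induction n.
    - exact Hdec.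
    - apply (push_mono X U f (nu (S n)) (nu n)); auto.
      apply (proj1 (HI (S n))). apply (proj1 (HI n)). }
  assert (Hdecr : forall n m, (n <= m)%nat -> mle X (nu m) (nu n)).
  { intros n m Hnm. induction Hnm.
    - intros p _. lra.
    - intros p Hp. specialize (IHHnm p Hp). specialize (Hstep m p Hp). lra. }
  set (minf := fun phi => Rinf (fun r => exists n, r = nu n phi)).
  assert (Hglb : forall phi, cont X phi -> is_glb (fun r => exists n, r = nu n phi) (minf phi)).
  { intros phi Hp. apply Rinf_spec.
    - exists (nu 0%nat phi). exists 0%nat. auto.
    - destruct (cont_bounded X phi Hp) as [M HM].
      exists (- (C * M)). intros r [n ->].
      pose proof (Rabs_le_inv _ _ (proj2 (HI n) phi Hp M HM)). lra. }
  assert (Hle : forall phi n, cont X phi -> minf phi <= nu n phi).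
  { intros phi n Hp. apply (glb_le _ _ _ (Hglb phi Hp)). exists n. auto. }
  assert (Hcv : forall phi, cont X phi -> Un_cv (fun n => nu n phi) (minf phi)).
  { intros phi Hp eps He.
    destruct (glb_approx _ _ eps (Hglb phi Hp) He) as [r [[N ->] HN]].
    exists N. intros n Hn. unfold R_dist.
    pose proof (Hle phi n Hp). pose proof (Hdecr N n Hn phi Hp).
    rewrite Rabs_right; lra. }
  assert (HSM : SMplus X minf).
  { split; [|split; [|split]].
    - intros p q Hp Hq.
      apply (Rle_cv_lim (Un := fun n => nu n (fun x => p x + q x))
                        (Vn := fun n => nu n p + nu n q)).
      + intros n. apply (proj1 (HI n)); auto.
      + apply Hcv. apply cont_plus; auto.
      + apply CV_plus; apply Hcv; auto.
    - intros l p Hl Hp.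
      apply (UL_sequence (fun n => nu n (fun x => l * p x))).
      + apply Hcv. apply cont_scal; auto.
      + assert (E : (fun n => nu n (fun x => l * p x)) = (fun n => l * nu n p)).
        { apply functional_extensionality. intros n. apply (proj1 (HI n)); auto. }
        rewrite E. intros eps He.
        destruct (Hcv p Hp (eps / (Rabs l + 1))) as [N HN].
        { apply Rdiv_lt_0_compat. lra. pose proof (Rabs_pos l). lra. }
        exists N. intros n Hn. specialize (HN n Hn). unfold R_dist in *.
        replace (l * nu n p - l * minf p) with (l * (nu n p - minf p)) by ring.
        rewrite Rabs_mult. pose proof (Rabs_pos l). pose proof (Rabs_pos (nu n p - minf p)).
        apply Rle_lt_trans with (Rabs l * (eps / (Rabs l + 1))).
        apply Rmult_le_compat_l; lra.
        apply (Rmult_lt_reg_r (Rabs l + 1)). lra.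
        replace (Rabs l * (eps / (Rabs l + 1)) * (Rabs l + 1)) with (Rabs l * eps) by (field; lra).
        nra.
    - exists C. intros p Hp M HM. apply Rabs_le. split.
      + apply (glb_ge _ _ _ (Hglb p Hp)). intros r [n ->].
        pose proof (Rabs_le_inv _ _ (proj2 (HI n) p Hp M HM)). lra.
      + apply Rle_trans with (nu 0%nat p). apply Hle; auto.
        pose proof (Rabs_le_inv _ _ (proj2 (HI 0%nat) p Hp M HM)). lra.
    - intros p q Hp Hq Hpq.
      apply (Rle_cv_lim (Un := fun n => nu n p) (Vn := fun n => nu n q)).
      + intros n. apply (proj1 (HI n)); auto.
      + apply Hcv; auto.
      + apply Hcv; auto. }
  exists minf. split; [exact HSM|]. split; [|split; [|split]].
  - split. exists C. intros n. apply (proj2 (HI n)). intros phi Hp. apply Hcv. auto.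
  - intros phi Hp. apply (Hle phi 0%nat Hp).
  - intros phi Hp. apply Rle_antisym.
    + apply (glb_ge _ _ _ (Hglb phi Hp)). intros r [n ->].
      apply Rle_trans with (nu (S n) phi); [| apply Hstep; auto].
      unfold nu. rewrite iter_S. apply push_mono; auto. apply (proj1 (HI n)).
      intros q Hq. apply Hle; auto.
    + apply (push_ge X U f minf phi _ HD HSM Hp). intros psi Hpsi Hge.
      apply (glb_ge _ _ _ (Hglb psi Hpsi)). intros r [n ->].
      apply Rle_trans with (nu (S n) phi). apply Hle; auto.
      unfold nu. rewrite iter_S. apply push_le; auto. apply (proj1 (HI n)).
  - intros mu Hmu Hmu0le Hfix.
    assert (Hall : forall n, mle X mu (nu n)).
    { induction n.
      - exact Hmu0le.
      - intros phi Hp. unfold nu. rewrite iter_S. rewrite <- (Hfix phi Hp).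
        apply push_mono; auto. apply (proj1 (HI n)). }
    intros phi Hp. apply (glb_ge _ _ _ (Hglb phi Hp)). intros r [n ->]. apply Hall; auto.
Qed.


Lemma part3 X U f mu0 : dense_set X U -> inhabited X -> SMplus X mu0 ->
  (mle X mu0 (pushforward X U f mu0) ->
     exists mu_min, SMplus X mu_min /\
       mle X mu0 mu_min /\ meq X (pushforward X U f mu_min) mu_min /\
       forall mu, SMplus X mu -> mle X mu0 mu -> meq X (pushforward X U f mu) mu ->
         mle X mu_min mu).
Proof.
  intros HD Hin Hmu0 Hinc.
  pose proof Hmu0 as [_ [_ [[C HC] _]]].
  set (D := fun mu : functional X => SMplus X mu /\ bounded_by X C mu /\ mle X mu0 mu /\
        mle X mu (pushforward X U f mu) /\
        (forall nu, SMplus X nu -> mle X mu0 nu -> meq X (pushforward X U f nu) nu -> mle X mu nu)).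
  assert (D0 : D mu0).
  { unfold D. split; [exact Hmu0|]. split; [exact HC|]. split; [intros p _; lra|]. split; [exact Hinc|]. intros nu _ H _; exact H. }
  set (m := fun phi => Rsup (fun r => exists mu, D mu /\ r = mu phi)).
  assert (Hlub : forall phi, cont X phi -> is_lub (fun r => exists mu, D mu /\ r = mu phi) (m phi)).
  { intros phi Hp. apply Rsup_spec.
    - exists (mu0 phi). exists mu0. auto.
    - destruct (cont_bounded X phi Hp) as [M HM]. exists (C * M).
      intros r [mu [[_ [HB _]] ->]]. pose proof (Rabs_le_inv _ _ (HB phi Hp M HM)). lra. }
  assert (Hge : forall mu phi, D mu -> cont X phi -> mu phi <= m phi).
  { intros mu phi Hmu Hp. apply (lub_ge _ _ _ (Hlub phi Hp)). exists mu. auto. }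
  assert (Hleast : forall phi c, cont X phi -> (forall mu, D mu -> mu phi <= c) -> m phi <= c).
  { intros phi c Hp H. apply (lub_le _ _ _ (Hlub phi Hp)). intros r [mu [Hmu ->]]. auto. }
  assert (HB : bounded_by X C m).
  { intros p Hp M HM. apply Rabs_le. split.
    - apply Rle_trans with (mu0 p). pose proof (Rabs_le_inv _ _ (HC p Hp M HM)). lra.
      apply Hge; auto.
    - apply Hleast; auto. intros mu [_ [Hb _]]. pose proof (Rabs_le_inv _ _ (Hb p Hp M HM)). lra. }
  assert (HSM : SMplus X m).
  { split; [|split; [|split]].
    - intros p q Hp Hq. apply Hleast. apply cont_plus; auto.
      intros mu Hmu. pose proof Hmu as [[Hs _] _].
      specialize (Hs p q Hp Hq). pose proof (Hge mu p Hmu Hp). pose proof (Hge mu q Hmu Hq). lra.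
    - intros l p Hl Hp.
      assert (Hlp : cont X (fun x => l * p x)) by (apply cont_scal; auto).
      destruct (Rle_lt_or_eq_dec 0 l ltac:(lra)) as [Hlt | Heq].
      + apply Rle_antisym.
        * apply Hleast; auto. intros mu Hmu. pose proof Hmu as [[_ [Hh _]] _].
          rewrite (Hh l p Hl Hp). apply Rmult_le_compat_l. lra. apply Hge; auto.
        * cut (m p <= m (fun x => l * p x) / l).
          { intros H. apply (Rmult_le_compat_l l) in H. 2: lra.
            replace (l * (m (fun x => l * p x) / l)) with (m (fun x => l * p x)) in H by (field; lra).
            exact H. }
          apply Hleast; auto. intros mu Hmu. pose proof Hmu as [[_ [Hh _]] _].
          pose proof (Hge mu _ Hmu Hlp). rewrite (Hh l p Hl Hp) in H.
          apply (Rmult_le_reg_l l). lra.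
          replace (l * (m (fun x => l * p x) / l)) with (m (fun x => l * p x)) by (field; lra). lra.
      + subst l. rewrite Rmult_0_l. apply Rle_antisym.
        * apply Hleast; auto. intros mu Hmu. pose proof Hmu as [[_ [Hh _]] _].
          rewrite (Hh 0 p Hl Hp). lra.
        * pose proof (Hge mu0 _ D0 Hlp) as H. pose proof Hmu0 as [_ [Hh _]].
          rewrite (Hh 0 p Hl Hp) in H. lra.
    - exists C. exact HB.
    - intros p q Hp Hq Hpq. apply Hleast; auto. intros mu Hmu. pose proof Hmu as [Hs _].
      apply Rle_trans with (mu q). apply (SM_mono X mu); auto. apply Hge; auto. }
  assert (Hm0 : mle X mu0 m) by (intros p Hp; apply Hge; auto).
  assert (Hmfix : forall nu, SMplus X nu -> mle X mu0 nu -> meq X (pushforward X U f nu) nu -> mle X m nu).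
  { intros nu Hnu H1 H2 p Hp. apply Hleast; auto. intros mu [_ [_ [_ [_ H]]]]. apply H; auto. }
  assert (Hmpost : mle X m (pushforward X U f m)).
  { intros p Hp. apply Hleast; auto. intros mu Hmu. pose proof Hmu as [HmuSM [_ [_ [Hpost _]]]].
    apply Rle_trans with (pushforward X U f mu p). apply Hpost; auto.
    apply (push_mono X U f mu m); auto. intros q Hq. apply Hge; auto. }
  assert (HSMp : SMplus X (pushforward X U f m)) by (apply push_SM; auto).
  assert (Dp : D (pushforward X U f m)).
  { split; [|split; [|split; [|split]]].
    - exact HSMp.
    - apply push_bounded; auto.
    - intros p Hp. apply Rle_trans with (m p). apply Hm0; auto. apply Hmpost; auto.
    - apply push_mono; auto.
    - intros nu Hnu H1 H2 p Hp. rewrite <- (H2 p Hp).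
      apply push_mono; auto. }
  exists m. split; [exact HSM|]. split; [exact Hm0|]. split; [|exact Hmfix].
  intros p Hp. apply Rle_antisym.
  - apply Hge; auto.
  - apply Hmpost; auto.
Qed.

Theorem theorem1p4 (X : CompactMetricSpace) (U : X -> Prop) (f : X -> X)
  (mu0 : functional X) :
  open_dense_map X U f -> SMplus X mu0 -> mnonzero X mu0 ->
  (* 1) *)
  (forall mu : functional X, weak_cluster X (cesaro X U f mu0) mu ->
     mle X mu (pushforward X U f mu)) /\
  (* 2) *)
  (mle X (pushforward X U f mu0) mu0 ->
     exists mu_inf, SMplus X mu_inf /\
       weak_conv X (fun n => push_iter X U f n mu0) mu_inf /\
       mle X mu_inf mu0 /\ meq X (pushforward X U f mu_inf) mu_inf /\
       forall mu, SMplus X mu -> mle X mu mu0 -> meq X (pushforward X U f mu) mu ->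
         mle X mu mu_inf) /\
  (* 3) *)
  (mle X mu0 (pushforward X U f mu0) ->
     exists mu_min, SMplus X mu_min /\
       mle X mu0 mu_min /\ meq X (pushforward X U f mu_min) mu_min /\
       forall mu, SMplus X mu -> mle X mu0 mu -> meq X (pushforward X U f mu) mu ->
         mle X mu_min mu).
Proof.
  intros [_ [HD _]] Hmu0 Hnz.
  pose proof (SM_inhabited X mu0 Hmu0 Hnz) as Hin.
  split. apply part1; auto. split. apply part2; auto. apply part3; auto.
Qed.
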